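(* Assume in addition that $p_j\ge -w_j$ for every $j\in J$. Let $S^*$ be an optimal solution of the Target Associated $k$-Set problem and let $\hat S$ be the set of genes returned by the Greedy algorithm. Then $W(\hat S)\ge W(S^* )/k$.
   Context: Let $J$ be a finite set of samples and $G$ a finite set of genes; for each $g\in G$ a set $A_g\subseteq J$ is given. Each $j\in J$ has a weight $w_j\in\mathbb{R}$ and penalty $p_j>0$, and $k$ is a positive integer. For $S\subseteq G$ and $j\in J$, let $c_S(j)=|\{g\in S: j\in A_g\}|$, $U(S)=\bigcup_{g\in S}A_g$, and $$W(S)=\sum_{j\in U(S)} w_j-\sum_{j\in U(S)}(c_S(j)-1)\,p_j .$$ The Target Associated $k$-Set problem asks for $S\subseteq G$ with $|S|\le k$ maximizing $W(S)$ (all $W$ values are computed with the original weights $w_j$). The Greedy algorithm: maintain current weights $\tilde w_j$, initialized to $\tilde w_j=w_j$, and a current solution $\hat S=\emptyset$. For $\ell=1,\dots,k$: compute $\tilde W(A_g)=\sum_{j\in A_g}\tilde w_j$ for every $g\in G\setminus \hat S$; if no $g$ has $\tilde W(A_g)>0$, stop; otherwise pick $g$ maximizing $\tilde W(A_g)$, add $g$ to $\hat S$, and set $\tilde w_j\leftarrow -p_j$ for all $j\in A_g$. The output is $\hat S$. (The paper's choice of penalties — $p_j$ equal to the average of the positive normalized weights when $w_j>0$, and $p_j=|w_j|$ when $w_j<0$ — satisfies $p_j\ge -w_j$.) *)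

(* Defs.v *)
From HB Require Import structures.
From mathcomp Require Import all_boot all_order all_algebra.
Set Implicit Arguments. Unset Strict Implicit. Unset Printing Implicit Defensive.
Import Order.TTheory GRing.Theory Num.Theory.
Local Open Scope ring_scope.

Section TAkS.
Variables (R : realFieldType) (J G : finType) (A : G -> {set J}) (w p : J -> R).

Definition cnt (S : {set G}) (j : J) : nat := #|[set g in S | j \in A g]|.

Definition Uset (S : {set G}) : {set J} := \bigcup_(g in S) A g.

Definition Wval (S : {set G}) : R :=
  \sum_(j in Uset S) w j - \sum_(j in Uset S) ((cnt S j)%:R - 1) * p j.

Definition upd (wt : J -> R) (g : G) : J -> R :=
  fun j => if j \in A g then - p j else wt j.

Definition curw (s : seq G) : J -> R := foldl upd w s.

Definition tW (s : seq G) (g : G) : R := \sum_(j in A g) curw s j.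

(* s = g_1 ... g_m is a possible run (any tie-breaking) of Greedy with budget k *)
Definition greedy_run (k : nat) (s : seq G) : Prop :=
  [/\ (size s <= k)%N,
      (forall (pre post : seq G) (g : G), s = pre ++ g :: post ->
         [/\ g \notin pre, 0 < tW pre g &
             forall h : G, h \notin pre -> tW pre h <= tW pre g]) &
      (size s = k \/ forall h : G, h \notin s -> tW s h <= 0)].
End TAkS.

(* Main.v *)
Require Import Defs.
From HB Require Import structures.
From mathcomp Require Import all_boot all_order all_algebra.
From mathcomp Require Import ring lra.
Import Order.TTheory GRing.Theory Num.Theory.
Local Open Scope ring_scope.

Section Aux.
Variables (R : realFieldType) (J G : finType) (A : G -> {set J}) (w p : J -> R).

Lemma cnt_gt0 (S : {set G}) (j : J) : (0 < cnt A S j)%N = (j \in Uset A S).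
Proof.
rewrite /cnt card_gt0; apply/set0Pn/bigcupP.
  by move=> [g]; rewrite inE => /andP[gS jA]; exists g.
by move=> [g gS jA]; exists g; rewrite inE gS.
Qed.

Lemma WvalE (S : {set G}) : Wval A w p S =
  \sum_j ((j \in Uset A S)%:R * w j - ((cnt A S j)%:R - (j \in Uset A S)%:R) * p j).
Proof.
rewrite /Wval -sumrB big_mkcond /=; apply: eq_bigr => j _.
case: ifP => jU; first by rewrite mul1r.
have : (cnt A S j = 0)%N by apply/eqP; rewrite -leqn0 leqNgt cnt_gt0 jU.
by move=> ->; rewrite !mul0r subrr mul0r subrr.
Qed.

Lemma Uset_U1 (g : G) (S : {set G}) : Uset A (g |: S) = A g :|: Uset A S.
Proof.
apply/setP => j; rewrite inE; apply/bigcupP/orP.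
  move=> [h]; rewrite in_setU1 => /orP[/eqP->|hS] jA; first by left.
  by right; apply/bigcupP; exists h.
move=> [jA|/bigcupP[h hS jA]]; first by exists g; rewrite ?setU11.
by exists h; rewrite // in_setU1 hS orbT.
Qed.

Lemma cnt_U1 (g : G) (S : {set G}) (j : J) : g \notin S -> cnt A (g |: S) j = (cnt A S j + (j \in A g))%N.
Proof.
move=> gS; rewrite /cnt; case: (boolP (j \in A g)) => ja.
  have -> : [set h in g |: S | j \in A h] = g |: [set h in S | j \in A h].
    by apply/setP => h; rewrite !inE; case: eqP => // ->; rewrite ja.
  by rewrite cardsU1 inE (negPf gS) /= addnC.
rewrite addn0; suff -> : [set h in g |: S | j \in A h] = [set h in S | j \in A h] by [].
apply/setP => h; rewrite !inE.
by case: eqP => // ->; rewrite (negPf ja) (negPf gS).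
Qed.

Lemma Wval_U1 (g : G) (S : {set G}) : g \notin S ->
  Wval A w p (g |: S) = Wval A w p S +
     \sum_(j in A g) (if j \in Uset A S then - p j else w j).
Proof.
move=> gS; rewrite !WvalE [X in _ + X]big_mkcond /= -big_split /=; apply: eq_bigr => j _.
rewrite Uset_U1 inE cnt_U1 //.
case: (boolP (j \in A g)) => ja /=; last by rewrite addn0 addr0.
case: (boolP (j \in Uset A S)) => jU /=.
  rewrite natrD /=; ring.
have -> : cnt A S j = 0%N by apply/eqP; rewrite -leqn0 leqNgt cnt_gt0 (negPf jU).
rewrite /=; ring.
Qed.

Lemma set_rcons (s : seq G) g : [set x in rcons s g] = g |: [set x in s].
Proof. by apply/setP => x; rewrite !inE mem_rcons in_cons. Qed.

Lemma curwE s j : curw A w p s j =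
  if j \in Uset A [set x in s] then - p j else w j.
Proof.
elim/last_ind: s => [|s g IH].
  have -> : [set x in [::] : seq G] = set0 by apply/setP => x; rewrite !inE.
  by rewrite /Uset big_set0 inE.
rewrite /curw foldl_rcons -/(curw A w p s) /upd IH set_rcons Uset_U1 inE.
by case: (j \in A g).
Qed.

Lemma Wval0 : Wval A w p set0 = 0.
Proof. by rewrite /Wval /Uset big_set0 !big_set0 subrr. Qed.

Lemma Wval_rcons s g : g \notin s ->
  Wval A w p [set x in rcons s g] = Wval A w p [set x in s] + tW A w p s g.
Proof.
move=> gs; rewrite set_rcons Wval_U1 ?inE //; congr (_ + _).
by apply: eq_bigr => j _; rewrite curwE.
Qed.

Lemma Wval_le_sum (hpw : forall j, - w j <= p j) S :
  Wval A w p S <= \sum_(g in S) tW A w p [::] g.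
Proof.
elim: {S}_.+1 {-2}S (ltnSn #|S|) => // n IH S leS.
case: (set_0Vmem S) => [->|[g gS]]; first by rewrite Wval0 big_set0.
rewrite -(setD1K gS); have ng : g \notin S :\ g by rewrite setD11.
rewrite Wval_U1 // big_setU1 //= addrC lerD //; last first.
  apply: ler_sum => j _; rewrite /curw /=; case: ifP => // _.
  by have := hpw j; lra.
apply: IH; rewrite -ltnS (leq_trans _ leS) // ltnS.
by rewrite (cardsD1 g S) gS.
Qed.

End Aux.

Theorem mainTheorem3 (R : realFieldType) (J G : finType) (A : G -> {set J})
    (w p : J -> R) (k : nat)
    (hp : forall j, 0 < p j) (hpw : forall j, - w j <= p j) (hk : (0 < k)%N)
    (Sopt : {set G})
    (hSopt_card : (#|Sopt| <= k)%N)
    (hSopt_opt : forall S : {set G}, (#|S| <= k)%N -> Wval A w p S <= Wval A w p Sopt)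
    (s : seq G) (hs : greedy_run A w p k s) :
  Wval A w p Sopt / k%:R <= Wval A w p [set g in s].
Proof.
case: hs => _ hstep hterm.
have kpos : 0 < (k%:R : R) by rewrite ltr0n.
rewrite ler_pdivrMr //.
have pref : forall t rest, s = t ++ rest ->
   0 <= Wval A w p [set x in t] /\
   (forall g1 t2, t = g1 :: t2 -> tW A w p [::] g1 <= Wval A w p [set x in t]).
  elim/last_ind => [|t g IH] rest.
    have -> : [set x in [::] : seq G] = set0 by apply/setP => x; rewrite !inE.
    by rewrite Wval0.
  rewrite cat_rcons => es; have [IH1 IH2] := IH _ es.
  have [gt tpos _] := hstep _ _ _ es.
  rewrite Wval_rcons //; split; first lra.
  clear IH; case: t IH1 IH2 gt tpos es => [|g1' t2'] IH1 IH2 gt tpos es g1 t2 /= [<- _].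
    have -> : [set x in [::] : seq G] = set0 by apply/setP => x; rewrite !inE.
    by rewrite Wval0 add0r.
  by have := IH2 _ _ erefl; lra.
case: s hstep hterm pref => [|g1 post] hstep hterm pref.
  have h0 : forall h, tW A w p [::] h <= 0.
    case: hterm => [/= k0|H h]; first by rewrite -k0 in hk.
    by apply: H.
  have -> : [set x in [::] : seq G] = set0 by apply/setP => x; rewrite !inE.
  rewrite Wval0 mul0r (le_trans (@Wval_le_sum _ _ _ A w p hpw Sopt)) //.
  by rewrite sumr_le0 // => g _; apply: h0.
have [_ M0 Mmax] := hstep [::] post g1 erefl.
apply: (le_trans (@Wval_le_sum _ _ _ A w p hpw Sopt)).
apply: (@le_trans _ _ (tW A w p [::] g1 * k%:R)); last first.
  rewrite ler_pM2r //; case: (pref (g1::post) [::] (esym (cats0 _))) => _ H3.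
  exact: H3 g1 post erefl.
apply: (@le_trans _ _ (\sum_(g in Sopt) tW A w p [::] g1)).
  by apply: ler_sum => g _; apply: Mmax.
rewrite sumr_const -(mulr_natr (tW A w p [::] g1) #|Sopt|).
apply: ler_wpM2l; first exact: ltW.
by rewrite ler_nat.
Qed.
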